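(* Let $k\ge 0$ be an integer and let $G=(V,E)$ be a finite graph which is the union of a finite nonempty family $Q$ of v-cliques (i.e. $V=\bigcup_{C\in Q}C$ and $E$ is the set of pairs of distinct nodes lying in a common member of $Q$). Suppose that for every pair of v-cliques $C,C'\in Q$ there is a sequence $C=C_0,C_1,\dots,C_t=C'$ of members of $Q$ such that $|C_{i-1}\cap C_i|\ge k+1$ for all $i=1,\dots,t$. Then $G$ is $k$-robust.
   Context: A v-clique is a set of nodes inducing a complete subgraph. A finite simple undirected graph $H$ is $k$-robust if, after removing arbitrary $k$ nodes of $H$ and the edges incident to them, the remaining graph is still connected; a clique or a single node is $k$-robust for every $k$. *)

(* Defs.v *)
From mathcomp Require Import all_boot.
Set Implicit Arguments. Unset Strict Implicit. Unset Printing Implicit Defensive.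

(* A finite simple graph is given by a vertex set V : {set T} (T a finType)
   and a symmetric irreflexive adjacency relation adj on T (only its
   restriction to V matters). *)

(* The graph H = (V, adj) restricted to the vertex set W is connected:
   any two vertices of W are joined by a path staying inside W.
   (The empty graph counts as connected.) *)
Definition connected_on (T : finType) (adj : rel T) (W : {set T}) : Prop :=
  forall x y, x \in W -> y \in W ->
    connect [rel a b | [&& a \in W, b \in W & adj a b]] x y.

Definition k_robust (T : finType) (V : {set T}) (adj : rel T) (k : nat) : Prop :=
  forall S : {set T}, S \subset V -> #|S| <= k -> connected_on adj (V :\: S).

Definition union_vertices (T : finType) (Q : {set {set T}}) : {set T} :=
  \bigcup_(C in Q) C.

Definition union_adj (T : finType) (Q : {set {set T}}) : rel T :=
  fun x y => (x != y) && [exists C in Q, (x \in C) && (y \in C)].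

Definition k_chain_linked (T : finType) (Q : {set {set T}}) (k : nat)
    (C C' : {set T}) : Prop :=
  exists s : seq {set T},
    [/\ all (fun D => D \in Q) s,
        path (fun A B => k.+1 <= #|A :&: B|) C s
      & last C s = C'].

(* Main.v *)
Require Import Defs.
From mathcomp Require Import all_boot.

Section Aux.
Variables (T : finType) (k : nat) (Q : {set {set T}}) (S : {set T}).
Let W := union_vertices Q :\: S.
Let e := [rel a b | [&& a \in W, b \in W & union_adj Q a b]].

Lemma clique_conn C z w : C \in Q -> z \in C -> w \in C -> z \in W -> w \in W ->
  connect e z w.
Proof.
move=> CQ zC wC zW wW.
case: (eqVneq z w) => [->|nzw]; first exact: connect0.
apply: connect1; rewrite /= zW wW /union_adj nzw /=.
by apply/existsP; exists C; rewrite CQ zC wC.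
Qed.

Lemma chain_conn x (s : seq {set T}) : #|S| <= k -> forall C z y,
  C \in Q -> all (fun D => D \in Q) s ->
  path (fun A B => k.+1 <= #|A :&: B|) C s ->
  z \in C -> z \in W -> connect e x z -> y \in last C s -> y \in W -> connect e x y.
Proof.
move=> hS; elim: s => [|D s IH] C z y CQ /= hall hp zC zW xz yC yW.
  apply: connect_trans xz _; exact: clique_conn CQ zC yC zW yW.
move/andP: hall => [DQ hall]; move/andP: hp => [hCD hp].
have : ~~ (C :&: D \subset S).
  apply/negP => sub; have := subset_leq_card sub.
  by move=> h; have := leq_trans hCD (leq_trans h hS); rewrite ltnn.
case/subsetPn => w; rewrite inE => /andP [wC wD] wS.
have wW : w \in W.
  rewrite /W inE wS /= /union_vertices; apply/bigcupP; by exists D.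
apply: (IH D w y DQ hall hp wD wW _ yC yW).
apply: connect_trans xz _; exact: clique_conn CQ zC wC zW wW.
Qed.
End Aux.

Theorem theorem2 (T : finType) (k : nat) (Q : {set {set T}}) :
  Q != set0 ->
  (forall C C', C \in Q -> C' \in Q -> k_chain_linked Q k C C') ->
  k_robust (union_vertices Q) (union_adj Q) k.
Proof.
move=> _ hlink S _ hS x y xW yW.
have := xW; rewrite inE => /andP [_ /bigcupP [C CQ xC]].
have := yW; rewrite inE => /andP [_ /bigcupP [C' C'Q yC']].
have [s [hall hp hl]] := hlink C C' CQ C'Q.
have := @chain_conn T k Q S x s hS C x y CQ hall hp xC xW (connect0 _ _).
rewrite hl; apply => //.
Qed.
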